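(* The cone $\Omega$ has dimension $15$, the maximal possible (equal to $\operatorname{rank}A$).
   Context: Kummer surface. Let $C$ be a very general smooth projective curve of genus 2, $J(C)$ its Jacobian, and $S$ the minimal resolution of the Kummer quartic $J(C)/\{\pm1\}\subset\mathbb{P}^3$; $S$ is a K3 surface of Picard number 17 and $NS(S)=\mathrm{Pic}(S)$. The group $J(C)_2$ is indexed as $\{0\}\cup\{ij:1\le i<j\le 6\}$ (unordered pairs, also $0=66$), with $0$ the identity, $ij+jk=ik$, and $ij+kl=mn$ whenever $\{i,j,k,l,m,n\}=\{1,\dots,6\}$. For $\alpha\in J(C)_2$, $N_\alpha$ is the exceptional $(-2)$-curve over the node indexed by $\alpha$ and $T_\alpha$ is the trope indexed by $\alpha$ (a smooth rational $(-2)$-curve). Each $T_\beta$ meets exactly the six $N_\alpha$ with $\alpha\in I(T_\beta)$, where $I(T_0)=\{0,16,26,36,46,56\}$, $I(T_{i6})=\{0,i6,ij,ik,il,im\}$, $I(T_{ij})=\{i6,j6,ij,kl,km,lm\}$ for $\{i,j,k,l,m\}=\{1,\dots,5\}$. $\Lambda$ is the pullback of the hyperplane class; $\Lambda^2=4$, $N_\alpha^2=-2$, $\Lambda\cdot N_\alpha=0$, $N_\alpha\cdot N_\beta=0$ for $\alpha\neq\beta$, and $T_\beta=\tfrac12(\Lambda-\sum_{\alpha\in I(T_\beta)}N_\alpha)$. The switch $\sigma$ is the involution of $S$ with $N_\alpha\leftrightarrow T_\alpha$, $\Lambda\mapsto3\Lambda-\sum_\alpha N_\alpha$. A Göpel tetrad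 is a 4-element subset $g\subset J(C)_2$ no three elements of which lie in a common $I(T_\beta)$. A Weber hexad is a 6-element subset $w\subset J(C)_2$ no four elements of which lie in a common $I(T_\beta)$ or a common Göpel tetrad. $r_g:=\Lambda-\sum_{\alpha\in g}N_\alpha$, $r_w:=3\Lambda-2\sum_{\alpha\in w}N_\alpha$. Lattices. $R:=T_0$; $b:=\tfrac12\big(3\Lambda-\sum_{i=1}^6N_{i6}-2\sum_{1\le i<j\le5}N_{ij}\big)$; $B:=\mathbb{Z}b+\mathbb{Z}R$; $A:=B^\perp\subset NS(S)$ (rank 15). Domain: $P(S)$ is the component of $\{x^2>0\}$ in $NS(S)\otimes\mathbb{R}$ containing ample classes; $D':=\{x\in P(S): x\cdot r>0$ for all $r$ among $N_\alpha,T_\alpha,\Lambda-2N_\alpha,\sigma(\Lambda-2N_\alpha)$ ($\alpha\in J(C)_2$), $r_g$ (all 60 Göpel tetrads), $r_w$ (all 192 Weber hexads)$\}$; $\Omega:=\overline{D'}\cap(A\otimes\mathbb{R})$. *)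

(* Defs.v *)
From HB Require Import structures.
From mathcomp Require Import all_boot all_order all_algebra.
From mathcomp Require Import reals.
Set Implicit Arguments. Unset Strict Implicit. Unset Printing Implicit Defensive.
Import Order.TTheory GRing.Theory Num.Theory.
Local Open Scope ring_scope.

(* ---------- Indexing of J(C)_2 ----------
   J(C)_2 = 'I_16.  Element k has label [lab k] : nat * nat:
   0 ↦ (6,6) (the identity, "0 = 66"), and the 15 pairs ij (i<j) in
   lexicographic order. *)
Definition J2 := 'I_16.

Definition pairs : seq (nat * nat) :=
  [:: (6,6); (1,2); (1,3); (1,4); (1,5); (1,6); (2,3); (2,4); (2,5); (2,6);
      (3,4); (3,5); (3,6); (4,5); (4,6); (5,6)]%N.

Definition lab (a : J2) : nat * nat := nth (6,6)%N pairs a.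

(* alpha ∈ I(T_beta) *)
Definition inI (be al : J2) : bool :=
  let: (i, j) := lab be in
  let: (a, b) := lab al in
  if (i == 6)%N then (b == 6)%N
  else if (j == 6)%N then (a == 6)%N || (a == i) || (b == i)
  else ((b == 6)%N && ((a == i) || (a == j)))
       || ((b <= 5)%N && (((a == i) && (b == j)) ||
             [&& a != i, a != j, b != i & b != j])).

Definition Iset (be : J2) : {set J2} := [set al | inI be al].

Definition gopel (g : {set J2}) : bool :=
  (#|g| == 4)%N && [forall be : J2, #|g :&: Iset be| <= 2]%N.

Definition weber (w : {set J2}) : bool :=
  [&& (#|w| == 6)%N, [forall be : J2, #|w :&: Iset be| <= 3]%N
    & [forall g : {set J2}, gopel g ==> (#|w :&: g| <= 3)%N]].

(* ---------- NS(S) ⊗ R = R^17 ----------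
   coordinate 0 : Λ ;  coordinate (lift ord0 a) : N_a. *)
Section NS.
Variable R : realType.
Definition vec := 'rV[R]_17.

Definition Lam : vec := delta_mx 0 ord0.
Definition Nv (a : J2) : vec := delta_mx 0 (lift ord0 a).

Definition form (x y : vec) : R :=
  4 * (x 0 ord0 * y 0 ord0)
  - 2 * \sum_(a : J2) x 0 (lift ord0 a) * y 0 (lift ord0 a).

Definition Tv (be : J2) : vec := 2^-1 *: (Lam - \sum_(a in Iset be) Nv a).

Definition sigma (x : vec) : vec :=
  x 0 ord0 *: (3%:R *: Lam - \sum_(a : J2) Nv a)
  + \sum_(a : J2) x 0 (lift ord0 a) *: Tv a.

Definition r_g (g : {set J2}) : vec := Lam - \sum_(a in g) Nv a.
Definition r_w (w : {set J2}) : vec := 3%:R *: Lam - 2%:R *: \sum_(a in w) Nv a.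

Definition root_vec (r : vec) : Prop :=
  (exists a, r = Nv a) \/ (exists a, r = Tv a) \/
  (exists a, r = Lam - 2%:R *: Nv a) \/
  (exists a, r = sigma (Lam - 2%:R *: Nv a)) \/
  (exists g, gopel g /\ r = r_g g) \/
  (exists w, weber w /\ r = r_w w).

(* positive cone component containing the ample classes
   (Λ is nef and big, so this is the component with x·Λ > 0) *)
Definition Pcone (x : vec) : Prop := 0 < form x x /\ 0 < form x Lam.

Definition Dprime (x : vec) : Prop :=
  Pcone x /\ forall r, root_vec r -> 0 < form x r.

Definition closure17 (D : vec -> Prop) (x : vec) : Prop :=
  forall e : R, 0 < e -> exists y, D y /\ forall k, `|x 0 k - y 0 k| < e.

(* R = T_0, b, and A ⊗ R = B^⊥ ⊂ NS(S) ⊗ R *)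
Definition Rv : vec := Tv ord0.
Definition bv : vec :=
  2^-1 *: (3%:R *: Lam - \sum_(a : J2 | (lab a).2 == 6%N) Nv a
           - 2%:R *: \sum_(a : J2 | (lab a).2 != 6%N) Nv a).

Definition AR (x : vec) : Prop := form x bv = 0 /\ form x Rv = 0.

Definition Omega (x : vec) : Prop := closure17 Dprime x /\ AR x.

Definition span_dim (S : vec -> Prop) (d : nat) : Prop :=
  (exists M : 'M[R]_(d, 17), (forall i, S (row i M)) /\ \rank M = d) /\
  (forall n (M : 'M[R]_(n, 17)), (forall i, S (row i M)) -> (\rank M <= d)%N).
End NS.

(* Main.v *)
Require Import Defs.
From HB Require Import structures.
From mathcomp Require Import all_boot all_order all_algebra.
From mathcomp Require Import reals.
From mathcomp Require Import ring lra zify.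
Set Implicit Arguments. Unset Strict Implicit. Unset Printing Implicit Defensive.
Import Order.TTheory GRing.Theory Num.Theory.
Local Open Scope ring_scope.

Lemma lift_neq0 (a : J2) : (lift ord0 a == ord0 :> 'I_17) = false.
Proof. by []. Qed.

Lemma Lam0 (R : realType) : (Lam R) 0 ord0 = 1.
Proof. by rewrite /Lam mxE !eqxx. Qed.
Lemma LamL (R : realType) b : (Lam R) 0 (lift ord0 b) = 0.
Proof. by rewrite /Lam mxE. Qed.
Lemma Nv0 (R : realType) a : (Nv R a) 0 ord0 = 0.
Proof. by rewrite /Nv mxE. Qed.
Lemma NvL (R : realType) a b : (Nv R a) 0 (lift ord0 b) = (b == a)%:R.
Proof. by rewrite /Nv mxE eqxx /= (inj_eq (@lift_inj _ ord0)). Qed.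

Lemma sumN0 (R : realType) (P : pred J2) : (\sum_(a | P a) Nv R a) 0 ord0 = 0.
Proof. by rewrite summxE big1 // => a _; rewrite Nv0. Qed.
Lemma sumNL (R : realType) (P : pred J2) b :
  (\sum_(a | P a) Nv R a) 0 (lift ord0 b) = (P b)%:R.
Proof.
rewrite summxE. case Pb: (P b).
  rewrite (bigD1 b) //= NvL eqxx big1 ?addr0 // => a /andP[_ ab].
  by rewrite NvL eq_sym (negbTE ab).
by rewrite big1 // => a Pa; rewrite NvL; case: eqP => // ba; move: Pa; rewrite -ba Pb.
Qed.

Lemma form_affine (R : realType) (x r : 'rV[R]_17) al be ga (S : pred J2) :
  r 0 ord0 = al -> (forall b, r 0 (lift ord0 b) = be + ga * (S b)%:R) ->
  Defs.form x r = 4 * x 0 ord0 * al - 2 * be * \sum_b x 0 (lift ord0 b)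
             - 2 * ga * \sum_(b | S b) x 0 (lift ord0 b).
Proof.
move=> h0 hL; rewrite /Defs.form h0 mulrA.
under eq_bigr => b _ do rewrite hL mulrDr.
rewrite big_split /= (big_mkcond S) /= -mulr_suml.
have -> : \sum_(i<16) x 0 (lift ord0 i) * (ga * (S i)%:R) =
   ga * \sum_i (if S i then x 0 (lift ord0 i) else 0).
  by rewrite mulr_sumr; apply: eq_bigr => i _; case: (S i) => /=; ring.
ring.
Qed.

Lemma Tv0 (R : realType) be : (Tv R be) 0 ord0 = 2^-1.
Proof. by rewrite /Tv !mxE !eqxx sumN0 /= subr0 mulr1. Qed.
Lemma TvL (R : realType) be b :
  (Tv R be) 0 (lift ord0 b) = 0 + (- 2^-1) * (b \in Iset be)%:R.
Proof. rewrite /Tv !mxE eqxx lift_neq0 (sumNL _ (fun a => a \in Iset be)) /=. ring. Qed.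

Lemma LN0 (R : realType) a : (Lam R - 2%:R *: Nv R a) 0 ord0 = 1.
Proof. rewrite !mxE !eqxx /=. ring. Qed.
Lemma LNL (R : realType) a b :
  (Lam R - 2%:R *: Nv R a) 0 (lift ord0 b) = 0 + (-2) * (b == a)%:R.
Proof. rewrite !mxE !eqxx lift_neq0 /= (inj_eq (@lift_inj _ ord0)). ring. Qed.

Lemma rg0 (R : realType) g : (r_g R g) 0 ord0 = 1.
Proof. by rewrite /r_g !mxE !eqxx sumN0 /= subr0. Qed.
Lemma rgL (R : realType) g b : (r_g R g) 0 (lift ord0 b) = 0 + (-1) * (b \in g)%:R.
Proof. rewrite /r_g !mxE eqxx lift_neq0 (sumNL _ (fun a => a \in g)) /=. ring. Qed.

Lemma rw0 (R : realType) w : (r_w R w) 0 ord0 = 3.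
Proof. by rewrite /r_w !mxE !eqxx sumN0 /= mulr0 subr0 mulr1. Qed.
Lemma rwL (R : realType) w b : (r_w R w) 0 (lift ord0 b) = 0 + (-2) * (b \in w)%:R.
Proof. rewrite /r_w !mxE eqxx lift_neq0 (sumNL _ (fun a => a \in w)) /=. ring. Qed.

Lemma bv0 (R : realType) : (bv R) 0 ord0 = 3 / 2.
Proof. rewrite /bv !mxE !eqxx !sumN0 /=. by field. Qed.
Lemma bvL (R : realType) b : (bv R) 0 (lift ord0 b) =
   -1 + 2^-1 * ((lab b).2 == 6%N)%:R.
Proof.
rewrite /bv !mxE eqxx lift_neq0 (sumNL _ (fun a => (lab a).2 == 6%N))
  (sumNL _ (fun a => (lab a).2 != 6%N)) /=.
case: ((lab b).2 == 6%N) => /=; by field.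
Qed.

Lemma sum_pick (R : realType) (a0 : J2) (F : J2 -> R) :
  \sum_a (a == a0)%:R * F a = F a0.
Proof.
rewrite (bigD1 a0) //= eqxx big1 ?addr0; first by rewrite mul1r.
by move=> a /negbTE ->; rewrite mul0r.
Qed.

Ltac esimp := rewrite ?mxE ?eqxx /= ?(inj_eq (@lift_inj _ ord0)) ?lift_neq0 /= ?sumN0 ?sumNL.

Lemma sig0 (R : realType) a : (sigma (Lam R - 2%:R *: Nv R a)) 0 ord0 = 2.
Proof.
rewrite /sigma mxE summxE LN0.
rewrite (eq_bigr (fun i => (i == a)%:R * (-1))); last first.
  by move=> i _; esimp; field.
rewrite (sum_pick a (fun _ => -1)); esimp; ring.
Qed.

Lemma sigL (R : realType) a b : (sigma (Lam R - 2%:R *: Nv R a)) 0 (lift ord0 b) =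
   0 + (-1) * (b \notin Iset a)%:R.
Proof.
rewrite /sigma mxE summxE LN0.
rewrite (eq_bigr (fun i => (i == a)%:R * ((b \in Iset i)%:R))); last first.
  by move=> i _; rewrite mxE TvL; esimp; field.
rewrite (sum_pick a (fun i => (b \in Iset i)%:R)); esimp.
by case: (b \in Iset a) => /=; ring.
Qed.
Definition inIn (be al : nat) : bool :=
  let: (i, j) := nth (6,6)%N pairs be in
  let: (a, b) := nth (6,6)%N pairs al in
  if (i == 6)%N then (b == 6)%N
  else if (j == 6)%N then (a == 6)%N || (a == i) || (b == i)
  else ((b == 6)%N && ((a == i) || (a == j)))
       || ((b <= 5)%N && (((a == i) && (b == j)) ||
             [&& a != i, a != j, b != i & b != j])).

Lemma inIE (be al : J2) : inI be al = inIn be al.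
Proof. by []. Qed.

Lemma card16 (P : nat -> bool) : #|[set a : 'I_16 | P a]| = count P (iota 0 16).
Proof.
rewrite -sum1dep_card -(big_mkord (fun i => P i) (fun _ => 1%N)).
by rewrite sum1_count.
Qed.

Lemma forall16 (P : nat -> bool) : all P (iota 0 16) -> forall be : 'I_16, P be.
Proof. by move/allP => H be; apply: H; rewrite mem_iota /= ltn_ord. Qed.

Lemma IsetE (be : J2) : Iset be = [set a : 'I_16 | inIn be a].
Proof. by apply/setP => a; rewrite !inE. Qed.

Lemma card_Iset (be : J2) : #|Iset be| = 6%N.
Proof.
rewrite IsetE card16; apply/eqP.
have H : all (fun be => count (inIn be) (iota 0 16) == 6)%N (iota 0 16) by vm_compute.
exact: forall16 H be.
Qed.

Lemma I0E (a : J2) : (a \in Iset ord0) = ((lab a).2 == 6%N).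
Proof.
rewrite inE inIE.
have H : all (fun a => inIn 0 a == ((nth (6,6)%N pairs a).2 == 6%N)) (iota 0 16) by vm_compute.
by apply/eqP; exact: forall16 H a.
Qed.

Lemma card_I0I (be : J2) : be != ord0 -> #|Iset be :&: Iset ord0| = 2%N.
Proof.
have -> : Iset be :&: Iset ord0 = [set a : 'I_16 | inIn be a && inIn 0 a].
  by apply/setP => a; rewrite !inE.
rewrite (card16 (fun n => inIn be n && inIn 0 n)) => hb.
have H : all (fun be => (be != 0%N) ==> (count (fun a => inIn be a && inIn 0 a) (iota 0 16) == 2)%N) (iota 0 16) by vm_compute.
have hb' : (nat_of_ord be == 0%N) = false by apply/negbTE; exact: hb.
by have := forall16 H be; rewrite hb' /= => /eqP.
Qed.

Lemma card_I0D (be : J2) : be != ord0 -> #|Iset be :\: Iset ord0| = 4%N.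
Proof.
have -> : Iset be :\: Iset ord0 = [set a : 'I_16 | ~~ inIn 0 a && inIn be a].
  by apply/setP => a; rewrite !inE.
rewrite (card16 (fun n => ~~ inIn 0 n && inIn be n)) => hb.
have H : all (fun be => (be != 0%N) ==> (count (fun a => ~~ inIn 0 a && inIn be a) (iota 0 16) == 4)%N) (iota 0 16) by vm_compute.
have hb' : (nat_of_ord be == 0%N) = false by apply/negbTE; exact: hb.
by have := forall16 H be; rewrite hb' /= => /eqP.
Qed.

Lemma card_C (A : {set J2}) : #|A| = 6%N -> #|~: A| = 10%N.
Proof. by move=> h; have := cardsC A; rewrite h card_ord => /eqP; rewrite eqn_add2l => /eqP. Qed.

Lemma sum_le_card (R : realType) (F : J2 -> R) h (A : {set J2}) :
  (forall a, F a <= h) -> \sum_(a in A) F a <= h *+ #|A|.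
Proof. by move=> hF; rewrite -sumr_const; apply: ler_sum => a _. Qed.

Lemma sum_le_card_in (R : realType) (F : J2 -> R) h (A : {set J2}) :
  (forall a, a \in A -> F a <= h) -> \sum_(a in A) F a <= h *+ #|A|.
Proof. by move=> hF; rewrite -sumr_const; apply: ler_sum. Qed.

Lemma sum_le2 (R : realType) (F : J2 -> R) h k (A : {set J2}) :
  (forall a, F a <= h) -> (forall a, a \notin Iset ord0 -> F a <= k) ->
  \sum_(a in A) F a <= h *+ #|A :&: Iset ord0| + k *+ #|A :\: Iset ord0|.
Proof.
move=> hh hk; rewrite (big_setID (Iset ord0)) /=; apply: lerD.
  exact: sum_le_card.
rewrite -sumr_const; apply: ler_sum => a; rewrite inE => /andP[ha _]; exact: hk.
Qed.

Lemma sum_full (R : realType) (F : J2 -> R) :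
  \sum_a F a = \sum_(a in Iset ord0) F a + \sum_(a in ~: Iset ord0) F a.
Proof.
rewrite (bigID (fun a => a \in Iset ord0)) /=; congr (_ + _).
by apply: eq_bigl => a; rewrite in_setC.
Qed.

Lemma sq_le (R : realType) (u v : R) : u < 0 -> - u <= v -> u * u <= v ^+ 2.
Proof. rewrite expr2 => h1 h2; nra. Qed.

Lemma Dprime_crit (R : realType) (x : 'rV[R]_17) (h k : R) :
  0 < x 0 ord0 -> (forall a, x 0 (lift ord0 a) < 0) ->
  (forall a, - x 0 (lift ord0 a) <= h) ->
  (forall a, a \notin Iset ord0 -> - x 0 (lift ord0 a) <= k) ->
  - \sum_(a in Iset ord0) x 0 (lift ord0 a) < 2 * x 0 ord0 ->
  0 <= k -> 10 * h < 4 * x 0 ord0 -> 2 * h + 4 * k < 2 * x 0 ord0 ->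
  6 * h ^+ 2 + 10 * k ^+ 2 < 2 * x 0 ord0 ^+ 2 ->
  Dprime x.
Proof.
set t := x 0 ord0 => ht hneg hh hk hT0 k0 H1 H2 H3.
have h0 : 0 <= h by have := hh ord0; have := hneg ord0; lra.
have sumc (A : {set J2}) : - \sum_(a in A) x 0 (lift ord0 a) <= h *+ #|A|.
  by rewrite -sumrN; apply: sum_le_card.
split; first split.
- rewrite /Defs.form -/t.
  have : \sum_a x 0 (lift ord0 a) * x 0 (lift ord0 a) <= h ^+ 2 *+ 6 + k ^+ 2 *+ 10.
    rewrite sum_full; apply: lerD.
      rewrite -[X in _ *+ X](card_Iset ord0); apply: sum_le_card => a.
      exact: sq_le (hneg a) (hh a).
    rewrite -[X in _ *+ X](card_C (card_Iset ord0)); apply: sum_le_card_in => a.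
    rewrite inE => ha.
    exact: sq_le (hneg a) (hk a ha).
  rewrite -(mulr_natl (h ^+ 2)) -(mulr_natl (k ^+ 2)); move: H3; rewrite !expr2.
  move: (\sum_a _) (h * h) (k * k) (t * t) => S a b c; lra.
- rewrite (@form_affine R x (Lam R) 1 0 0 pred0 (Lam0 R)); last first.
    by move=> b; rewrite LamL; ring.
  rewrite -/t; lra.
move=> r [[a ->]|[[a ->]|[[a ->]|[[a ->]|[[g [hg ->]]|[w [hw ->]]]]]]].
- rewrite (@form_affine R x _ 0 0 1 (fun b => b == a) (Nv0 R a)); last first.
    by move=> b; rewrite NvL; ring.
  rewrite big_pred1_eq; have := hneg a; lra.
- rewrite (@form_affine R x _ _ 0 (-2^-1) (fun b => b \in Iset a) (Tv0 R a) (TvL R a)) -/t.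
  have [->|ha] := eqVneq a ord0; first lra.
  have := @sum_le2 R (fun b => - x 0 (lift ord0 b)) h k (Iset a) hh hk.
  rewrite sumrN card_I0I // card_I0D // -(mulr_natl h) -(mulr_natl k).
  move: (\sum_(b in Iset a) _) => S; lra.
- rewrite (@form_affine R x _ _ 0 (-2) (fun b => b == a) (LN0 R a) (LNL R a)).
  rewrite big_pred1_eq -/t; have := hh a; lra.
- rewrite (@form_affine R x _ _ 0 (-1) (fun b => b \notin Iset a) (sig0 R a) (sigL R a)) -/t.
  have := sumc (~: Iset a); rewrite card_C ?card_Iset // -(mulr_natl h).
  rewrite (eq_bigl (fun b => b \notin Iset a)); last by move=> b; rewrite in_setC.
  move: (\sum_(b | _) _) => S; lra.
- rewrite (@form_affine R x _ _ 0 (-1) (fun b => b \in g) (rg0 R g) (rgL R g)) -/t.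
  have := sumc g; move: hg => /andP[/eqP -> _]; rewrite -(mulr_natl h).
  move: (\sum_(b in g) _) => S; lra.
- rewrite (@form_affine R x _ _ 0 (-2) (fun b => b \in w) (rw0 R w) (rwL R w)) -/t.
  have := sumc w; move: hw => /and3P[/eqP -> _ _]; rewrite -(mulr_natl h).
  move: (\sum_(b in w) _) => S; lra.
Qed.

Lemma closure_crit (R : realType) (x : 'rV[R]_17) (h k : R) :
  0 < x 0 ord0 -> (forall a, x 0 (lift ord0 a) < 0) ->
  (forall a, - x 0 (lift ord0 a) <= h) ->
  (forall a, a \notin Iset ord0 -> - x 0 (lift ord0 a) <= k) ->
  - \sum_(a in Iset ord0) x 0 (lift ord0 a) <= 2 * x 0 ord0 ->
  0 <= k -> 10 * h < 4 * x 0 ord0 -> 2 * h + 4 * k < 2 * x 0 ord0 ->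
  6 * h ^+ 2 + 10 * k ^+ 2 < 2 * x 0 ord0 ^+ 2 ->
  closure17 (@Dprime R) x.
Proof.
move=> ht hneg hh hk hT0 k0 H1 H2 H3 e he.
set s := e / 2.
have hs : 0 < s by rewrite /s; lra.
exists (x + s *: Lam R); split.
  have z0 : (x + s *: Lam R) 0 ord0 = x 0 ord0 + s by rewrite !mxE !eqxx /= mulr1.
  have zL a : (x + s *: Lam R) 0 (lift ord0 a) = x 0 (lift ord0 a).
    by rewrite !mxE eqxx lift_neq0 /= mulr0 addr0.
  apply: (@Dprime_crit R _ h k); rewrite ?z0 //.
  - lra.
  - by move=> a; rewrite zL.
  - by move=> a; rewrite zL.
  - by move=> a; rewrite zL; exact: hk.
  - under eq_bigr => a _ do rewrite zL. lra.
  - lra.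
  - lra.
  - move: H3; rewrite !expr2; move: (x 0 ord0) ht => u hu; nra.
move=> j; rewrite !mxE; case: (j == ord0); rewrite /= ?mulr1 ?mulr0 ?addr0.
  by rewrite opprD addrA subrr sub0r normrN gtr0_norm // /s; lra.
by rewrite subrr normr0.
Qed.

Definition wt (R : realType) (k : 'I_17) : R := if k == ord0 then 4 else -2.

Lemma form_sum (R : realType) (x y : 'rV[R]_17) :
  Defs.form x y = \sum_k x 0 k * (wt R k * y 0 k).
Proof.
rewrite big_ord_recl /Defs.form /wt eqxx.
under [X in _ = _ + X]eq_bigr => i _ do rewrite lift_neq0.
rewrite mulr_sumr -sumrN.
congr (_ + _); first ring.
by apply: eq_bigr => i _; ring.
Qed.

Definition Gm (R : realType) : 'M[R]_(17, 2) :=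
  \matrix_(k, j) (wt R k * (if j == ord0 then bv R else Rv R) 0 k).

Definition Pm (R : realType) : 'M[R]_(2, 17) :=
  \matrix_(i, k) (if (i : nat) == 0%N then (if (k : nat) == 2%N then 2^-1 else 0)
                  else (if (k : nat) == 0%N then 2^-1 else if (k : nat) == 2%N then -(3/2) else 0)).

Definition k2 : 'I_17 := lift ord0 (lift ord0 (ord0 : 'I_15)).
Lemma k2E : (k2 : nat) = 2%N. Proof. by []. Qed.

Lemma sum17_02 (R : realType) (F : 'I_17 -> R) :
  (forall k : 'I_17, (k : nat) != 0%N -> (k : nat) != 2%N -> F k = 0) ->
  \sum_k F k = F ord0 + F k2.
Proof.
move=> hF; rewrite (bigD1 ord0) // (bigD1 k2) //= big1 ?addr0 //.
by move=> k /andP[h2 h0]; apply: hF.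
Qed.

Lemma PG (R : realType) : Pm R *m Gm R = 1%:M.
Proof.
apply/matrixP => i j; rewrite !mxE sum17_02; last first.
  by move=> k h0 h2; rewrite mxE (negbTE h0) (negbTE h2) !if_same mul0r.
rewrite !mxE k2E /= /wt eqxx lift_neq0 /Rv.
have e1 : (bv R) 0 k2 = -1 by rewrite bvL /=; ring.
have e2 : (Tv R ord0) 0 k2 = 0 by rewrite TvL I0E /=; ring.
case: i => -[|[|//]] Hi; case: j => -[|[|//]] Hj;
  rewrite /= ?e1 ?e2 ?bv0 ?Tv0 /=. all: by field.
Qed.

Lemma rank_AR (R : realType) n (M : 'M[R]_(n, 17)) :
  (forall i, AR (row i M)) -> (\rank M <= 15)%N.
Proof.
move=> hM.
have MG : M *m Gm R = 0.
  apply/matrixP => i j; rewrite !mxE.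
  have [hb hr] := hM i.
  have -> : \sum_k M i k * Gm R k j = Defs.form (row i M) (if j == ord0 then bv R else Rv R).
    by rewrite form_sum; apply: eq_bigr => k _; rewrite !mxE.
  by case: (j == ord0).
have := mulmx0_rank_max MG.
have : (2 <= \rank (Gm R))%N by rewrite -{1}(mxrank1 R 2) -PG mxrankM_maxr.
lia.
Qed.

Definition L0 : seq nat := [:: 0;5;9;12;14;15]%N.
Definition LO : seq nat := [:: 1;2;3;4;6;7;8;10;11;13]%N.
Definition cval (i a : nat) : nat :=
  if a \in L0 then (10 + ((0 < i <= 5) && (a == 0)) - ((0 < i <= 5) && (a == nth 0 L0 i)))%N
  else (6 + ((5 < i) && (a == 1)) - ((5 < i) && (a == nth 0 LO (i - 5))))%N.
Definition mval (i k : nat) : int := if k == 0%N then 30%:Z else - (cval i k.-1)%:Z.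
Definition aj (j : nat) : nat := if (j <= 5)%N then nth 0%N L0 j else nth 0%N LO (j - 5).
Definition qval (k j : nat) : int :=
  if j == 0%N then (if k == 0%N then - (103%:Z) else if k.-1 \in [seq aj j' | j' <- iota 1 14] then - (30%:Z) else 0%:Z)
  else (if k == 0%N then (if (j <= 5)%N then 10%:Z else 6%:Z) else if k == (aj j).+1 then 30%:Z else 0%:Z).
Lemma chk1 : all (fun i => all (fun j => (\sum_(0 <= k < 17) mval i k * qval k j)%R == (if i == j then 30%:Z else 0%:Z)) (iota 0 15)) (iota 0 15).
Proof. by rewrite unlock; vm_compute. Qed.
Lemma chk2 : all (fun i => all (fun a => [&& (0 < cval i a)%N, (cval i a <= 11)%N & ((a \notin L0) ==> (cval i a <= 7)%N)]) (iota 0 16)) (iota 0 15).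
Proof. by vm_compute. Qed.
Lemma chk3 : all (fun i => ((\sum_(0 <= a < 16 | a \in L0) cval i a) == 60) && ((\sum_(0 <= a < 16 | a \notin L0) cval i a) == 60))%N (iota 0 15).
Proof. by rewrite unlock; vm_compute. Qed.

Lemma chk4 : all (fun a => inIn 0 a == (a \in L0)) (iota 0 16).
Proof. by vm_compute. Qed.

Lemma I0L0 (a : J2) : (a \in Iset ord0) = (nat_of_ord a \in L0).
Proof.
have ha : nat_of_ord a \in iota 0 16 by rewrite mem_iota /= ltn_ord.
by rewrite inE inIE; apply/eqP; exact: (allP chk4 a ha).
Qed.

Lemma natr_sumJ (R : realType) (P : pred J2) (F : J2 -> nat) :
  \sum_(a | P a) (F a)%:R = ((\sum_(a | P a) F a)%N)%:R :> R.
Proof. by rewrite (big_morph (fun n : nat => n%:R : R) (natrD R) (mulr0n 1)). Qed.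

Lemma iota15 (i : 'I_15) : (nat_of_ord i \in iota 0 15).
Proof. by rewrite mem_iota /= ltn_ord. Qed.

Lemma sumI0 (R : realType) (i : 'I_15) : \sum_(a in Iset ord0) (cval i a)%:R = 60 :> R.
Proof.
rewrite natr_sumJ (eq_bigl (fun a : 'I_16 => nat_of_ord a \in L0)); last by move=> a; rewrite I0L0.
rewrite -(big_mkord (fun a => a \in L0) (cval i)).
by have /andP[/eqP -> _] := allP chk3 i (iota15 i).
Qed.

Lemma sumO (R : realType) (i : 'I_15) : \sum_(a in ~: Iset ord0) (cval i a)%:R = 60 :> R.
Proof.
rewrite natr_sumJ (eq_bigl (fun a : 'I_16 => nat_of_ord a \notin L0)); last by move=> a; rewrite in_setC I0L0.
rewrite -(big_mkord (fun a => a \notin L0) (cval i)).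
by have /andP[_ /eqP ->] := allP chk3 i (iota15 i).
Qed.

Definition MR (R : realType) : 'M[R]_(15, 17) := \matrix_(i, k) (mval i k)%:~R.

Lemma MR0 (R : realType) i : (row i (MR R)) 0 ord0 = 30.
Proof. by rewrite !mxE. Qed.

Lemma MRL (R : realType) i a : (row i (MR R)) 0 (lift ord0 a) = - (cval i a)%:R.
Proof. by rewrite !mxE lift0 /mval /= intrN -pmulrn. Qed.

Lemma formRv (R : realType) (x : 'rV[R]_17) :
  Defs.form x (Rv R) = 2 * x 0 ord0 + \sum_(a in Iset ord0) x 0 (lift ord0 a).
Proof.
rewrite /Rv (@form_affine R x _ _ 0 (-2^-1) (fun b => b \in Iset ord0) (Tv0 R ord0) (TvL R ord0)).
rewrite mulr0 mul0r subr0; by field.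
Qed.

Lemma formbv (R : realType) (x : 'rV[R]_17) :
  Defs.form x (bv R) = 6 * x 0 ord0 + 2 * \sum_(a in ~: Iset ord0) x 0 (lift ord0 a)
     + \sum_(a in Iset ord0) x 0 (lift ord0 a).
Proof.
rewrite (@form_affine R x _ _ (-1) (2^-1) (fun b => (lab b).2 == 6%N) (bv0 R) (bvL R)).
have -> : \sum_(b | (lab b).2 == 6%N) x 0 (lift ord0 b) = \sum_(b in Iset ord0) x 0 (lift ord0 b) by apply: eq_bigl => b; rewrite I0E.
rewrite sum_full; by field.
Qed.

Lemma row_Omega (R : realType) (i : 'I_15) : Omega (row i (MR R)).
Proof.
have hI := sumI0 R i; have hO := sumO R i.
have hc (a : J2) : [&& (0 < cval i a)%N, (cval i a <= 11)%N & ((nat_of_ord a \notin L0) ==> (cval i a <= 7)%N)].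
  have ha : nat_of_ord a \in iota 0 16 by rewrite mem_iota /= ltn_ord.
  exact: (allP (allP chk2 i (iota15 i)) a ha).
have sI : \sum_(a in Iset ord0) (row i (MR R)) 0 (lift ord0 a) = - 60.
  by rewrite -hI -sumrN; apply: eq_bigr => a _; rewrite MRL.
have sO : \sum_(a in ~: Iset ord0) (row i (MR R)) 0 (lift ord0 a) = - 60.
  by rewrite -hO -sumrN; apply: eq_bigr => a _; rewrite MRL.
split; last first.
  by split; [rewrite formbv sI sO MR0 | rewrite formRv sI MR0]; ring.
apply: (@closure_crit R _ 11 7); rewrite ?MR0 ?sI.
- by [].
- move=> a; rewrite MRL oppr_lt0 ltr0n; by case/and3P: (hc a).
- move=> a; rewrite MRL opprK ler_nat; by case/and3P: (hc a).
- move=> a ha; rewrite MRL opprK ler_nat; case/and3P: (hc a) => _ _ /implyP; apply.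
  by rewrite -I0L0.
- lra.
- lra.
- lra.
- lra.
- lra.
Qed.

Definition QR (R : realType) : 'M[R]_(17, 15) := \matrix_(k, j) ((qval k j)%:~R / 30).

Lemma MQ (R : realType) : MR R *m QR R = 1%:M.
Proof.
apply/matrixP => i j; rewrite !mxE.
rewrite (eq_bigr (fun k : 'I_17 => (mval i k * qval k j)%:~R / 30)); last first.
  by move=> k _; rewrite !mxE intrM mulrA.
rewrite -mulr_suml -(big_morph (fun z : int => z%:~R : R) (@intrD R) (mulr0z 1)).
rewrite -(big_mkord xpredT (fun k => mval i k * qval k j)).
have /eqP -> := allP (allP chk1 i (iota15 i)) j (iota15 j).
rewrite -[nat_of_ord i == nat_of_ord j]/(i == j); case: (i == j); rewrite /= -?pmulrn ?mul0r // divff // pnatr_eq0 //.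
Qed.

Lemma rank_MR (R : realType) : \rank (MR R) = 15%N.
Proof.
apply/eqP; rewrite eqn_leq rank_leq_row /=.
by rewrite -{1}(mxrank1 R 15) -(MQ R) mxrankM_maxl.
Qed.

Local Close Scope ring_scope.

Theorem proposition4p2 (R : realType) :
  span_dim (@Omega R) 15 /\ span_dim (@AR R) 15.
Proof.
split; split.
- by exists (MR R); split; [exact: row_Omega | exact: rank_MR].
- by move=> n M hM; apply: rank_AR => i; case: (hM i).
- by exists (MR R); split; [move=> i; case: (row_Omega R i) | exact: rank_MR].
- by move=> n M hM; apply: rank_AR.
Qed.
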